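(* Let $W\in\{\mathrm{A}_{\frac12\infty},\mathrm{D}_{\frac12\infty}\}$ and let $f_W:\mathbb{C}^2\to\mathbb{C}$ be the entire function defined below. Then the set of critical values of $f_W$ is $\{0,1\}$; that is, the set $C_W$ of critical points of $f_W$ is contained in $f_W^{-1}(0)\cup f_W^{-1}(1)$, and both values are attained at critical points.
   Context: Let $s(x)=\frac{\sin\sqrt{x}}{\sqrt{x}}=\prod_{n\ge1}\big(1-\frac{x}{n^2\pi^2}\big)$ and $c(x)=\cos\sqrt{x}=\prod_{n\ge1}\big(1-\frac{4x}{(2n-1)^2\pi^2}\big)$, entire functions of $x\in\mathbb{C}$ (real on $\mathbb{R}$), satisfying $xs(x)^2+c(x)^2=1$. Define $f_{\mathrm{A}_{\frac12\infty}}(x,y)=xs(x)^2-y^2=1-c(x)^2-y^2$ and $f_{\mathrm{D}_{\frac12\infty}}(x,y)=xs(x)^2-xy^2=1-c(x)^2-xy^2$ on $\mathbb{C}^2$. *)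

(* Defs.v *)
From Stdlib Require Import Reals.
From Coquelicot Require Import Coquelicot.
Open Scope C_scope.

(* Entire functions given by their (everywhere convergent) power series:
   c(x) = cos sqrt x = sum_n (-1)^n x^n / (2n)!,
   s(x) = sin sqrt x / sqrt x = sum_n (-1)^n x^n / (2n+1)!. *)
Definition c_term (x : C) (n : nat) : C :=
  RtoC ((-1)^n / INR (Factorial.fact (2 * n)))%R * Cpow x n.
Definition s_term (x : C) (n : nat) : C :=
  RtoC ((-1)^n / INR (Factorial.fact (2 * n + 1)))%R * Cpow x n.

Definition Cseries (a : nat -> C) : C :=
  (Series (fun n => Re (a n)), Series (fun n => Im (a n))).

Definition cfun (x : C) : C := Cseries (c_term x).
Definition sfun (x : C) : C := Cseries (s_term x).

Inductive Wtype := A_half_infty | D_half_infty.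

Definition fW (W : Wtype) (x y : C) : C :=
  match W with
  | A_half_infty => x * sfun x ^ 2 - y ^ 2
  | D_half_infty => x * sfun x ^ 2 - x * y ^ 2
  end.

Definition critical_point (F : C -> C -> C) (x y : C) : Prop :=
  @is_derive C_AbsRing C_NormedModule (fun t => F t y) x (RtoC 0) /\
  @is_derive C_AbsRing C_NormedModule (fun t => F x t) y (RtoC 0).

(* Main.v *)
Require Import Defs.
From Stdlib Require Import Reals Lra Lia.
From Coquelicot Require Import Coquelicot.
Open Scope C_scope.

Definition absC (u : nat -> C) := ex_series (fun n => Cmod (u n)).

Lemma exR_le (a b : nat -> R) : (forall n, Rabs (a n) <= b n) -> ex_series b -> ex_series a.
Proof. intros H Hb. apply (@ex_series_le R_AbsRing R_CompleteNormedModule a b); auto. Qed.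

Lemma Cseries_ext u v : (forall n, u n = v n) -> Cseries u = Cseries v.
Proof. intros H. unfold Cseries. f_equal; apply Series_ext; intros n; rewrite H; auto. Qed.

Lemma im_le_Cmod c : Rabs (Im c) <= Cmod c.
Proof. destruct c as [a b]. unfold Cmod; simpl.
  rewrite <- sqrt_Rsqr_abs. apply sqrt_le_1_alt. unfold Rsqr. nra. Qed.

Lemma absC_re u : absC u -> ex_series (fun n => fst (u n)).
Proof. intros H. apply ex_series_Rabs. eapply exR_le; [|exact H]. intros n; rewrite Rabs_Rabsolu; apply re_le_Cmod. Qed.
Lemma absC_im u : absC u -> ex_series (fun n => snd (u n)).
Proof. intros H. apply ex_series_Rabs. eapply exR_le; [|exact H]. intros n; rewrite Rabs_Rabsolu; apply im_le_Cmod. Qed.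

Lemma absC_plus u v : absC u -> absC v -> absC (fun n => u n + v n).
Proof. intros Hu Hv. eapply exR_le; [| apply (@ex_series_plus R_AbsRing R_NormedModule _ _ Hu Hv)].
  intros n. rewrite Rabs_pos_eq by apply Cmod_ge_0. apply Cmod_triangle. Qed.

Lemma absC_scal k u : absC u -> absC (fun n => k * u n).
Proof. intros Hu. eapply exR_le; [| apply (@ex_series_scal_l R_AbsRing R_NormedModule (Cmod k) _ Hu)].
  intros n. rewrite Rabs_pos_eq by apply Cmod_ge_0. rewrite Cmod_mult. apply Rle_refl. Qed.

Lemma absC_ext u v : (forall n, u n = v n) -> absC u -> absC v.
Proof. intros H Hu. eapply exR_le; [|exact Hu]. intros n; cbv beta; rewrite H, Rabs_pos_eq by apply Cmod_ge_0; lra. Qed.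

Lemma Cseries_plus u v : absC u -> absC v -> Cseries (fun n => u n + v n) = Cseries u + Cseries v.
Proof. intros Hu Hv. unfold Cseries. simpl.
  rewrite (Series_plus _ _ (absC_re _ Hu) (absC_re _ Hv)).
  rewrite (Series_plus _ _ (absC_im _ Hu) (absC_im _ Hv)). reflexivity. Qed.

Lemma Cseries_scal k u : absC u -> Cseries (fun n => k * u n) = k * Cseries u.
Proof. intros Hu. unfold Cseries. destruct k as [a b]. simpl.
  rewrite (Series_minus _ _), (Series_plus _ _), !Series_scal_l. reflexivity.
  all: try apply (@ex_series_scal_l R_AbsRing R_NormedModule); try apply absC_re; try apply absC_im; auto. Qed.

Lemma Cseries_opp u : Cseries (fun n => - u n) = - Cseries u.
Proof. unfold Cseries; simpl. rewrite !Series_opp. reflexivity. Qed.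

Lemma Cseries_incr (u : nat -> C) : u 0%nat = RtoC 0 -> Cseries u = Cseries (fun k => u (S k)).
Proof. intros H. unfold Cseries. rewrite (Series_incr_1_aux (fun n => Re (u n))), (Series_incr_1_aux (fun n => Im (u n))); auto; rewrite H; reflexivity. Qed.

Lemma Cmod_le_sum c : Cmod c <= Rabs (fst c) + Rabs (snd c).
Proof. destruct c as [a b]. unfold Cmod; simpl.
  rewrite <- (sqrt_Rsqr (Rabs a + Rabs b)) by (apply Rplus_le_le_0_compat; apply Rabs_pos).
  apply sqrt_le_1_alt. unfold Rsqr.
  assert (E1: (a*(a*1) = Rabs a * Rabs a)%R) by (rewrite <- Rabs_mult, Rabs_pos_eq; nra).
  assert (E2: (b*(b*1) = Rabs b * Rabs b)%R) by (rewrite <- Rabs_mult, Rabs_pos_eq; nra).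
  rewrite E1, E2.
  pose proof (Rabs_pos a). pose proof (Rabs_pos b). nra. Qed.

Lemma Cseries_norm u : absC u -> Cmod (Cseries u) <= 2 * Series (fun n => Cmod (u n)).
Proof. intros Hu. eapply Rle_trans. apply Cmod_le_sum. unfold Cseries; simpl.
  assert (Rabs (Series (fun n => fst (u n))) <= Series (fun n => Cmod (u n))).
  { eapply Rle_trans. apply Series_Rabs. eapply exR_le; [|exact Hu]. intros n; rewrite Rabs_Rabsolu; apply re_le_Cmod.
    apply Series_le; auto. intros n; split; [apply Rabs_pos|apply re_le_Cmod]. }
  assert (Rabs (Series (fun n => snd (u n))) <= Series (fun n => Cmod (u n))).
  { eapply Rle_trans. apply Series_Rabs. eapply exR_le; [|exact Hu]. intros n; rewrite Rabs_Rabsolu; apply im_le_Cmod.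
    apply Series_le; auto. intros n; split; [apply Rabs_pos|apply im_le_Cmod]. }
  unfold Re, Im; lra. Qed.

Lemma Cseries_minus u v : absC u -> absC v -> Cseries (fun n => u n - v n) = Cseries u - Cseries v.
Proof. intros Hu Hv. unfold Cminus.
  assert (Hv' : absC (fun n => - v n)).
  { eapply absC_ext; [|apply (absC_scal (-1) _ Hv)]. intros n; simpl; ring. }
  rewrite (Cseries_plus _ _ Hu Hv'). rewrite Cseries_opp. reflexivity. Qed.

Lemma Series_exp r : Series (fun n => (r ^ n / INR (Factorial.fact n))%R) = exp r.
Proof. apply is_series_unique. eapply is_series_ext; [|apply (is_exp_Reals r)].
  intros n. simpl. rewrite pow_n_pow. reflexivity. Qed.

Lemma ex_exp r : ex_series (fun n => (r ^ n / INR (Factorial.fact n))%R).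
Proof. exists (exp r). eapply is_series_ext; [|apply (is_exp_Reals r)].
  intros n. simpl. rewrite pow_n_pow. reflexivity. Qed.

Definition PS (a : nat -> R) (z : C) : C := Cseries (fun n => RtoC (a n) * Cpow z n).

Definition Bnd (a : nat -> R) (M : R) := forall n, Rabs (a n) <= M / INR (Factorial.fact n).

Lemma Bnd_M a M : Bnd a M -> 0 <= M.
Proof. intros H. specialize (H 0%nat). simpl in H. pose proof (Rabs_pos (a 0%nat)). lra. Qed.

Lemma absC_bound a M (w : nat -> C) Q : Bnd a M -> 0 <= Q -> (forall n, Cmod (w n) <= Q ^ n) ->
  absC (fun n => RtoC (a n) * w n).
Proof. intros Ha HQ Hw. eapply exR_le; [| apply (@ex_series_scal_l R_AbsRing R_NormedModule M _ (ex_exp Q))].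
  intros n. cbv beta. rewrite Rabs_pos_eq by apply Cmod_ge_0. rewrite Cmod_mult, Cmod_R.
  change (scal M (Q ^ n / INR (Factorial.fact n)))%R with (M * (Q ^ n / INR (Factorial.fact n)))%R.
  specialize (Ha n). specialize (Hw n).
  pose proof (Rabs_pos (a n)). pose proof (Cmod_ge_0 (w n)).
  assert (0 < INR (Factorial.fact n)) by (apply lt_0_INR; apply Factorial.lt_O_fact).
  unfold Rdiv in *. rewrite <- Rmult_assoc, (Rmult_comm M (Q^n)), Rmult_assoc.
  rewrite (Rmult_comm (Rabs (a n))). apply Rmult_le_compat; auto. Qed.

Lemma absPS a M z : Bnd a M -> absC (fun n => RtoC (a n) * Cpow z n).
Proof. intros Ha. apply (absC_bound a M _ (Cmod z) Ha (Cmod_ge_0 z)). intros n; rewrite Cmod_pow; lra. Qed.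

Lemma Cseries_bound a M (w : nat -> C) Q : Bnd a M -> 0 <= Q -> (forall n, Cmod (w n) <= Q ^ n) ->
  Cmod (Cseries (fun n => RtoC (a n) * w n)) <= 2 * M * exp Q.
Proof. intros Ha HQ Hw. eapply Rle_trans. apply Cseries_norm. eapply absC_bound; eauto.
  rewrite Rmult_assoc. apply Rmult_le_compat_l. lra.
  rewrite <- Series_exp, <- Series_scal_l. apply Series_le.
  2: apply (@ex_series_scal_l R_AbsRing R_NormedModule M _ (ex_exp Q)).
  intros n. split. apply Cmod_ge_0. rewrite Cmod_mult, Cmod_R.
  specialize (Ha n). specialize (Hw n).
  pose proof (Rabs_pos (a n)). pose proof (Cmod_ge_0 (w n)).
  assert (0 < INR (Factorial.fact n)) by (apply lt_0_INR; apply Factorial.lt_O_fact).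
  unfold Rdiv in *. rewrite <- Rmult_assoc, (Rmult_comm M (Q^n)), Rmult_assoc.
  rewrite (Rmult_comm (Rabs (a n))). apply Rmult_le_compat; auto. Qed.

Definition err (z h : C) (n : nat) : C := Cpow (z + h) n - Cpow z n - RtoC (INR n) * h * Cpow z (pred n).

Lemma err_rec z h n : err z h (S n) = (z + h) * err z h n + RtoC (INR n) * h * h * Cpow z (pred n).
Proof. unfold err. destruct n as [|m].
  - simpl. ring.
  - change (pred (S (S m))) with (S m). change (pred (S m)) with m.
    rewrite !Cpow_S. rewrite !S_INR, !RtoC_plus. ring. Qed.

Lemma INR_le_2pow n : INR n <= 2 ^ n.
Proof. pose proof (Nat.pow_gt_lin_r 2 n ltac:(lia)). apply lt_INR in H. rewrite pow_INR in H. replace (INR 2) with 2 in H by (simpl; lra). lra. Qed.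

Open Scope R_scope.
Lemma err_bound z h n : Cmod h <= 1 -> Cmod (err z h n) <= Cmod h ^ 2 * (2 * (Cmod z + 1)) ^ n.
Proof. intros Hh. set (Q := (Cmod z + 1)%R). assert (HQ : 1 <= Q) by (pose proof (Cmod_ge_0 z); unfold Q; lra).
  pose proof (Cmod_ge_0 h) as Hh0.
  induction n as [|n IH].
  - unfold err. simpl. replace (1 - 1 - RtoC 0 * h * 1)%C with (RtoC 0) by ring.
    rewrite Cmod_0. nra.
  - rewrite err_rec. eapply Rle_trans. apply Cmod_triangle.
    rewrite !Cmod_mult, !Cmod_R, Cmod_pow, Rabs_pos_eq by apply pos_INR.
    assert (Hzh : Cmod (z + h)%C <= Q) by (unfold Q; eapply Rle_trans; [apply Cmod_triangle|lra]).
    assert (H1 : INR n <= 2 ^ n) by apply INR_le_2pow.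
    assert (H2 : Cmod z ^ pred n <= Q ^ S n).
    { apply Rle_trans with (Q ^ pred n)%R. apply pow_incr. split. apply Cmod_ge_0. unfold Q; lra.
      apply Rle_pow; auto. lia. }
    assert (H3 : 0 <= Cmod z ^ pred n) by (apply pow_le; apply Cmod_ge_0).
    assert (H4 : 0 <= Cmod (err z h n)) by apply Cmod_ge_0.
    assert (H5 : 0 <= (2 * Q) ^ n) by (apply pow_le; lra).
    pose proof (pos_INR n).
    assert (E : (2 * Q) ^ S n = 2 * Q * (2 * Q) ^ n) by reflexivity.
    assert (E2 : (2 * Q) ^ n = 2 ^ n * Q ^ n) by apply Rpow_mult_distr.
    assert (E3 : Q ^ S n = Q * Q ^ n) by reflexivity.
    rewrite E. 
    assert (A1 : Cmod (z + h) * Cmod (err z h n) <= Q * (Cmod h ^ 2 * (2 * Q) ^ n)).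
    { apply Rmult_le_compat; auto; apply Cmod_ge_0. }
    assert (A2 : INR n * Cmod h * Cmod h * Cmod z ^ pred n <= Cmod h ^ 2 * (2 ^ n * Q ^ S n)).
    { replace (Cmod h ^ 2 * (2 ^ n * Q ^ S n))%R with (Cmod h * Cmod h * (2 ^ n * Q ^ S n))%R by ring.
      replace (INR n * Cmod h * Cmod h * Cmod z ^ pred n)%R with (Cmod h * Cmod h * (INR n * Cmod z ^ pred n))%R by ring.
      apply Rmult_le_compat_l. nra. apply Rmult_le_compat; auto. }
    rewrite E3 in A2. rewrite E2 in A1 |- *. nra.
Qed.

Open Scope C_scope.

Lemma absC_minus u v : absC u -> absC v -> absC (fun n => u n - v n).
Proof. intros Hu Hv. apply absC_plus; auto. eapply absC_ext; [|apply (absC_scal (-1) _ Hv)]. intros n; simpl; ring. Qed.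

Lemma Cseries_boundc a M (w : nat -> C) Q c : Bnd a M -> 0 <= Q -> 0 <= c -> c <= 1 ->
  (forall n, Cmod (w n) <= c * Q ^ n) ->
  Cmod (Cseries (fun n => RtoC (a n) * w n)) <= 2 * M * exp Q * c.
Proof. intros Ha HQ Hc Hc1 Hw. eapply Rle_trans. apply Cseries_norm. apply (absC_bound a M w Q); auto.
  intros n. specialize (Hw n). pose proof (pow_le Q n HQ). nra.
  replace (2 * M * exp Q * c)%R with (2 * (c * M * exp Q))%R by ring.
  apply Rmult_le_compat_l. lra.
  rewrite <- Series_exp, <- !Series_scal_l. apply Series_le.
  2: apply (@ex_series_scal_l R_AbsRing R_NormedModule (c * M)%R _ (ex_exp Q)).
  intros n. split. apply Cmod_ge_0. rewrite Cmod_mult, Cmod_R.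
  specialize (Ha n). specialize (Hw n).
  pose proof (Rabs_pos (a n)). pose proof (Cmod_ge_0 (w n)).
  assert (0 < INR (Factorial.fact n)) by (apply lt_0_INR; apply Factorial.lt_O_fact).
  unfold Rdiv in *. replace (c * M * (Q ^ n * / INR (Factorial.fact n)))%R with ((M * / INR (Factorial.fact n)) * (c * Q^n))%R by ring.
  apply Rmult_le_compat; auto. Qed.

Definition da (a : nat -> R) (n : nat) : R := (INR (S n) * a (S n))%R.

Lemma Bnd_da a M : Bnd a M -> Bnd (da a) M.
Proof. intros H n. unfold da. specialize (H (S n)). rewrite Rabs_mult, Rabs_pos_eq by apply pos_INR.
  rewrite fact_simpl, mult_INR in H.
  assert (0 < INR (S n)) by (apply lt_0_INR; lia).
  assert (0 < INR (Factorial.fact n)) by (apply lt_0_INR; apply Factorial.lt_O_fact).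
  unfold Rdiv in *. rewrite Rinv_mult in H.
  replace (M * / INR (Factorial.fact n))%R with (INR (S n) * (M * (/ INR (S n) * / INR (Factorial.fact n))))%R by (field; lra).
  apply Rmult_le_compat_l; lra. Qed.

Lemma Cminus_add (y z : C) : y = z + (y + - z).
Proof. ring. Qed.

Lemma deriv_from_bound (f : C -> C) z l K : 0 < K ->
  (forall h, Cmod h <= 1 -> Cmod (f (z + h) - f z - h * l) <= K * Cmod h ^ 2) ->
  is_derive f z l.
Proof. intros HK H. split. apply is_linear_scal_l.
  intros x Hx. apply (@is_filter_lim_locally_unique C_AbsRing (AbsRing_NormedModule C_AbsRing)) in Hx. subst x.
  intros eps. set (d := Rmin 1 (eps / K)).
  assert (Hd : 0 < d). { unfold d. apply Rmin_pos. lra. apply Rdiv_lt_0_compat; [apply cond_pos|lra]. }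
  exists (mkposreal d Hd).
  intros y Hy. change (Cmod (minus y z) < d) in Hy.
  set (h := minus y z) in *.
  assert (Ey : @eq C y (z + h)) by exact (Cminus_add y z).
  change (norm (minus (minus (f y) (f z)) (scal h l)) <= eps * norm h).
  change (Cmod (f y - f z - h * l) <= eps * Cmod h).
  assert (Hh1 : Cmod h <= 1). { assert (d <= 1) by apply Rmin_l. lra. }
  assert (Hh2 : Cmod h <= eps / K). { assert (d <= eps / K) by apply Rmin_r. lra. }
  rewrite Ey. eapply Rle_trans. apply H; auto.
  pose proof (Cmod_ge_0 h).
  assert (K * Cmod h <= eps). { apply (Rmult_le_compat_l K) in Hh2; [|lra]. field_simplify in Hh2; lra. }
  simpl. nra. Qed.

Lemma PS_deriv a M z : Bnd a M -> is_derive (PS a) z (PS (da a) z).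
Proof. intros Ha. pose proof (Bnd_M _ _ Ha) as HM.
  set (Q := (2 * (Cmod z + 1))%R).
  assert (HQ : 0 <= Q) by (unfold Q; pose proof (Cmod_ge_0 z); lra).
  apply (deriv_from_bound _ _ _ (2 * M * exp Q + 1)).
  { pose proof (exp_pos Q). nra. }
  intros h Hh.
  set (A := fun n => RtoC (a n) * Cpow (z + h) n).
  set (B := fun n => RtoC (a n) * Cpow z n).
  set (D := fun n => RtoC (a n) * (RtoC (INR n) * h * Cpow z (pred n))).
  set (E := fun n => RtoC (a n) * err z h n).
  assert (HA : absC A) by (apply (absPS a M); auto).
  assert (HB : absC B) by (apply (absPS a M); auto).
  assert (HE : absC E).
  { apply (absC_bound a M _ Q Ha HQ). intros n. eapply Rle_trans. apply err_bound; auto.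
    pose proof (Cmod_ge_0 h). pose proof (pow_le Q n HQ). unfold Q.
    assert (Cmod h ^ 2 <= 1)%R by (simpl; nra). fold Q. nra. }
  assert (HD : absC D).
  { eapply absC_ext; [|apply (absC_minus _ _ (absC_minus _ _ HA HB) HE)].
    intros n. unfold A, B, D, E, err. ring. }
  assert (ED : Cseries D = h * PS (da a) z).
  { rewrite (Cseries_incr D) by (unfold D; simpl; ring).
    unfold PS. rewrite <- Cseries_scal by (apply (absPS _ M); apply Bnd_da; auto).
    apply Cseries_ext. intros n. unfold D, da. simpl pred. rewrite RtoC_mult. ring. }
  assert (EE : Cseries E = PS a (z + h) - PS a z - h * PS (da a) z).
  { rewrite <- ED. unfold PS. fold A. fold B.
    rewrite <- (Cseries_minus _ _ HA HB), <- Cseries_minus; [| apply absC_minus; auto | auto].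
    apply Cseries_ext. intros n. unfold A, B, D, E, err. ring. }
  rewrite <- EE. unfold E.
  eapply Rle_trans. apply (Cseries_boundc a M _ Q (Cmod h ^ 2)); auto.
  apply pow_le, Cmod_ge_0. pose proof (Cmod_ge_0 h). simpl; nra.
  intros n. apply err_bound; auto.
  pose proof (pow_le (Cmod h) 2 (Cmod_ge_0 h)). nra.
Qed.

Lemma cfun_PS x : cfun x = PS cos_n x.
Proof. reflexivity. Qed.
Lemma sfun_PS x : sfun x = PS sin_n x.
Proof. reflexivity. Qed.

Lemma Bnd_cos : Bnd cos_n 1.
Proof. intros n. unfold cos_n, Rdiv. rewrite Rabs_mult, pow_1_abs, Rabs_inv, Rabs_pos_eq by apply pos_INR.
  assert (H : (Factorial.fact n <= Factorial.fact (2 * n))%nat) by (apply Factorial.fact_le; lia).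
  apply le_INR in H. assert (0 < INR (Factorial.fact n)) by (apply lt_0_INR; apply Factorial.lt_O_fact).
  rewrite !Rmult_1_l. apply Rinv_le_contravar; lra. Qed.

Lemma Bnd_sin : Bnd sin_n 1.
Proof. intros n. unfold sin_n, Rdiv. rewrite Rabs_mult, pow_1_abs, Rabs_inv, Rabs_pos_eq by apply pos_INR.
  assert (H : (Factorial.fact n <= Factorial.fact (2 * n + 1))%nat) by (apply Factorial.fact_le; lia).
  apply le_INR in H. assert (0 < INR (Factorial.fact n)) by (apply lt_0_INR; apply Factorial.lt_O_fact).
  rewrite !Rmult_1_l. apply Rinv_le_contravar; lra. Qed.

Lemma da_cos n : da cos_n n = (- / 2 * sin_n n)%R.
Proof. unfold da, cos_n, sin_n.
  replace (2 * S n)%nat with (S (S (2 * n)))%nat by lia.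
  replace (2 * n + 1)%nat with (S (2 * n))%nat by lia.
  rewrite (fact_simpl (S (2 * n))), mult_INR.
  assert (0 < INR (Factorial.fact (S (2 * n)))) by (apply lt_0_INR; apply Factorial.lt_O_fact).
  replace (INR (S (S (2 * n)))) with (2 * INR (S n))%R by (rewrite !S_INR, mult_INR; simpl; ring).
  assert (0 < INR (S n)) by (apply lt_0_INR; lia).
  simpl pow. field. lra. Qed.

Lemma cos_deriv x : is_derive cfun x (- / 2 * sfun x).
Proof. eapply is_derive_ext; [intros t; symmetry; apply cfun_PS|].
  replace (- / 2 * sfun x) with (PS (da cos_n) x). apply (PS_deriv _ 1 x Bnd_cos).
  unfold PS. rewrite sfun_PS. unfold PS. rewrite <- Cseries_scal by (apply (absPS _ 1); apply Bnd_sin).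
  apply Cseries_ext. intros n. rewrite da_cos, RtoC_mult, RtoC_opp, RtoC_inv by lra. ring. Qed.

Lemma da_sin_rel k : (2 * da sin_n k = cos_n (S k) - sin_n (S k))%R.
Proof. unfold da, cos_n, sin_n.
  set (m := (2 * S k)%nat).
  replace (m + 1)%nat with (S m) by lia.
  rewrite (fact_simpl m), mult_INR.
  assert (0 < INR (Factorial.fact m)) by (apply lt_0_INR; apply Factorial.lt_O_fact).
  assert (Hm : INR (S m) = (2 * INR (S k) + 1)%R) by (unfold m; rewrite S_INR, mult_INR; simpl; ring).
  rewrite Hm. assert (0 < INR (S k)) by (apply lt_0_INR; lia).
  field. lra. Qed.

Lemma sin_rel x : 2 * x * PS (da sin_n) x = cfun x - sfun x.
Proof.
  set (b := fun n => match n with O => 0%R | S k => (2 * da sin_n k)%R end).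
  unfold PS. rewrite <- Cseries_scal by (apply (absPS _ 1); apply Bnd_da, Bnd_sin).
  transitivity (Cseries (fun n => RtoC (b n) * Cpow x n)).
  { rewrite (Cseries_incr (fun n => RtoC (b n) * Cpow x n)) by (simpl; ring).
    apply Cseries_ext. intros n. simpl. rewrite RtoC_mult. ring. }
  rewrite cfun_PS, sfun_PS. unfold PS.
  rewrite <- Cseries_minus by (apply (absPS _ 1); first [apply Bnd_cos | apply Bnd_sin]).
  apply Cseries_ext. intros [|k].
  - simpl. unfold cos_n, sin_n. simpl. ring.
  - simpl b. rewrite da_sin_rel, RtoC_minus. ring. Qed.

Lemma sin_deriv x : is_derive sfun x (PS (da sin_n) x).
Proof. eapply is_derive_ext; [intros t; symmetry; apply sfun_PS|]. apply (PS_deriv _ 1 x Bnd_sin). Qed.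

Lemma tr1 (f : C -> C) x l : @is_derive C_AbsRing (AbsRing_NormedModule C_AbsRing) f x l -> @is_derive C_AbsRing C_NormedModule f x l.
Proof. intros [Hl Hd]. split. apply is_linear_scal_l. intros y Hy eps. exact (Hd y Hy eps). Qed.
Lemma tr2 (f : C -> C) x l : @is_derive C_AbsRing C_NormedModule f x l -> @is_derive C_AbsRing (AbsRing_NormedModule C_AbsRing) f x l.
Proof. intros [Hl Hd]. split. apply is_linear_scal_l. intros y Hy eps. exact (Hd y Hy eps). Qed.

Lemma dCmult (f g : C -> C) x df dg : is_derive f x df -> is_derive g x dg ->
  is_derive (fun t => f t * g t) x (df * g x + f x * dg).
Proof. intros Hf Hg. apply tr1. exact (is_derive_mult f g x df dg (tr2 _ _ _ Hf) (tr2 _ _ _ Hg) Cmult_comm). Qed.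

Lemma dCplus (f g : C -> C) x df dg : is_derive f x df -> is_derive g x dg ->
  is_derive (fun t => f t + g t) x (df + dg).
Proof. intros Hf Hg. exact (is_derive_plus f g x df dg Hf Hg). Qed.

Lemma dCminus (f g : C -> C) x df dg : is_derive f x df -> is_derive g x dg ->
  is_derive (fun t => f t - g t) x (df - dg).
Proof. intros Hf Hg. exact (is_derive_minus f g x df dg Hf Hg). Qed.

Lemma dCid x : is_derive (fun t : C => t) x (RtoC 1).
Proof. apply tr1. exact (@is_derive_id C_AbsRing x). Qed.

Lemma dCconst (a : C) x : is_derive (fun _ : C => a) x (RtoC 0).
Proof. apply tr1. exact (@is_derive_const C_AbsRing (AbsRing_NormedModule C_AbsRing) a x). Qed.

Lemma dCsq (f : C -> C) x df : is_derive f x df -> is_derive (fun t => f t ^ 2) x (2 * f x * df).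
Proof. intros Hf. apply (is_derive_ext (fun t => f t * (f t * 1))). intros t; reflexivity.
  replace (2 * f x * df) with (df * (f x * 1) + f x * (df * 1 + f x * 0)) by ring.
  apply (dCmult f (fun t => f t * 1)). exact Hf. apply (dCmult f (fun _ => RtoC 1)). exact Hf. apply dCconst. Qed.

Lemma deriv_eq (f : C -> C) x (l l' : C) : is_derive f x l -> @eq C l l' -> is_derive f x l'.
Proof. intros H E; subst; auto. Qed.

Lemma L1 x : is_derive (fun t => t * sfun t ^ 2) x (cfun x * sfun x).
Proof. eapply deriv_eq. apply dCmult. apply dCid. apply dCsq. apply sin_deriv.
  pose proof (sin_rel x) as H. replace (cfun x) with (2 * x * PS (da sin_n) x + sfun x) by (rewrite H; ring). ring. Qed.

Lemma L2 x : is_derive (fun t => cfun t ^ 2) x (- (cfun x * sfun x)).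
Proof. eapply deriv_eq. apply dCsq. apply cos_deriv. field. Qed.

Lemma const_comp (G : C -> C) (p : C -> R) z :
  (forall w, is_derive G w (RtoC 0)) ->
  (forall w, Rabs (p w) <= Cmod w) -> (forall a b, p (a - b) = (p a - p b)%R) ->
  forall t, is_derive (fun t => p (G (RtoC t * z))) t 0%R.
Proof. intros HG Hp Hl t. split. apply is_linear_scal_l.
  intros x Hx. apply (@is_filter_lim_locally_unique R_AbsRing (AbsRing_NormedModule R_AbsRing)) in Hx. subst x.
  intros eps.
  assert (Hz : 0 < Cmod z + 1) by (pose proof (Cmod_ge_0 z); lra).
  destruct (HG (RtoC t * z)) as [_ Hd].
  specialize (Hd (RtoC t * z) (fun P HP => HP) (mkposreal _ (Rdiv_lt_0_compat _ _ (cond_pos eps) Hz))).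
  destruct Hd as [d Hdd].
  exists (mkposreal _ (Rdiv_lt_0_compat _ _ (cond_pos d) Hz)).
  intros t' Ht'. change (Rabs (t' - t) < d / (Cmod z + 1)) in Ht'.
  assert (E : RtoC t' * z - RtoC t * z = RtoC (t' - t) * z) by (rewrite RtoC_minus; ring).
  assert (Hb : Cmod (RtoC t' * z - RtoC t * z) = (Rabs (t' - t) * Cmod z)%R) by (rewrite E, Cmod_mult, Cmod_R; auto).
  specialize (Hdd (RtoC t' * z)).
  assert (Hball : Cmod (RtoC t' * z - RtoC t * z) < d).
  { rewrite Hb. pose proof (Cmod_ge_0 z). pose proof (Rabs_pos (t' - t)).
    apply Rle_lt_trans with (Rabs (t' - t) * (Cmod z + 1))%R. nra.
    apply (Rmult_lt_compat_r (Cmod z + 1)) in Ht'; auto. field_simplify in Ht'; lra. }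
  specialize (Hdd Hball).
  change (Cmod (G (RtoC t' * z) - G (RtoC t * z) - (RtoC t' * z - RtoC t * z) * RtoC 0) <=
     eps / (Cmod z + 1) * Cmod (RtoC t' * z - RtoC t * z)) in Hdd.
  change (Rabs (p (G (RtoC t' * z)) - p (G (RtoC t * z)) - (t' - t) * 0) <= eps * Rabs (t' - t)).
  rewrite Hb in Hdd.
  replace (G (RtoC t' * z) - G (RtoC t * z) - (RtoC t' * z - RtoC t * z) * RtoC 0) with
    (G (RtoC t' * z) - G (RtoC t * z)) in Hdd by ring.
  rewrite Rmult_0_r, Rminus_0_r, <- Hl.
  eapply Rle_trans. apply Hp. eapply Rle_trans. apply Hdd.
  pose proof (Cmod_ge_0 z). pose proof (Rabs_pos (t' - t)). pose proof (cond_pos eps).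
  unfold Rdiv. rewrite <- Rmult_assoc.
  replace (eps * / (Cmod z + 1) * Rabs (t' - t) * Cmod z)%R with (eps * Rabs (t' - t) * (Cmod z * / (Cmod z + 1)))%R by ring.
  assert (Cmod z * / (Cmod z + 1) <= 1).
  { apply (Rmult_le_reg_r (Cmod z + 1)); auto. rewrite Rmult_assoc, Rinv_l by lra. lra. }
  assert (0 <= eps * Rabs (t' - t)) by nra. nra. Qed.

Lemma const_C (G : C -> C) : (forall w, is_derive G w (RtoC 0)) -> forall z, G z = G (RtoC 0).
Proof. intros HG z.
  assert (K : forall p : C -> R, (forall w, Rabs (p w) <= Cmod w) -> (forall a b, p (a - b) = (p a - p b)%R) ->
    p (G z) = p (G (RtoC 0))).
  { intros p Hp Hl. pose proof (const_comp G p z HG Hp Hl) as D.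
    destruct (MVT_cor4 (fun t => p (G (RtoC t * z))) (fun _ => 0%R) 0 1 (fun c _ => D c) 1) as [c [Hc _]].
    rewrite Rminus_0_r, Rabs_R1; lra.
    replace (RtoC 1 * z) with z in Hc by ring. replace (RtoC 0 * z) with (RtoC 0) in Hc by ring. lra. }
  apply injective_projections.
  - apply K. apply re_le_Cmod. intros; simpl; ring.
  - apply K. apply im_le_Cmod. intros; simpl; ring. Qed.

Lemma Series_zero : Series (fun _ => 0%R) = 0%R.
Proof. rewrite (Series_ext _ (fun n => 0 * 0)%R) by (intros; ring). rewrite Series_scal_l. ring. Qed.

Lemma PS_real a r : PS a (RtoC r) = RtoC (Series (fun n => (a n * r ^ n)%R)).
Proof. unfold PS, Cseries. apply injective_projections; cbn [fst snd RtoC].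
  - apply Series_ext. intros n. rewrite <- RtoC_pow, <- RtoC_mult. reflexivity.
  - rewrite <- Series_zero. apply Series_ext. intros n. rewrite <- RtoC_pow, <- RtoC_mult. reflexivity. Qed.

Lemma Series_at0 a : Series (fun n => (a n * 0 ^ n)%R) = a 0%nat.
Proof. rewrite Series_incr_1. simpl. rewrite (Series_ext _ (fun _ => 0%R)) by (intros; simpl; ring).
  rewrite Series_zero. ring.
  apply ex_series_incr_1. eapply ex_series_ext; [|apply (ex_series_scal_r 0 _ (ex_series_geom (1/2) ltac:(rewrite Rabs_pos_eq; lra)))].
  intros n. simpl. ring. Qed.

Lemma cfun0 : cfun (RtoC 0) = RtoC 1.
Proof. rewrite cfun_PS, PS_real, Series_at0. unfold cos_n. simpl. f_equal. field. Qed.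

Lemma ident x : x * sfun x ^ 2 + cfun x ^ 2 = RtoC 1.
Proof. pose (G := fun t => t * sfun t ^ 2 + cfun t ^ 2).
  assert (HG : forall w, is_derive G w (RtoC 0)).
  { intros w. eapply deriv_eq. apply dCplus. apply L1. apply L2. ring. }
  change (G x = RtoC 1). rewrite (const_C G HG x). unfold G. rewrite cfun0. ring. Qed.

Lemma cos_series x : Series (fun n => (cos_n n * (Rsqr x) ^ n)%R) = cos x.
Proof. unfold cos. destruct (exist_cos (Rsqr x)) as [l Hl]. apply is_series_unique, is_series_Reals. exact Hl. Qed.

Lemma sin_series x : (x * Series (fun n => (sin_n n * (Rsqr x) ^ n)%R))%R = sin x.
Proof. unfold sin. destruct (exist_sin (Rsqr x)) as [l Hl]. f_equal. apply is_series_unique, is_series_Reals. exact Hl. Qed.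

Definition xc : C := RtoC (Rsqr (PI / 2)).
Definition xs : C := RtoC (Rsqr PI).

Lemma c_xc : cfun xc = RtoC 0.
Proof. unfold xc. rewrite cfun_PS, PS_real, cos_series, cos_PI2. reflexivity. Qed.

Lemma s_xs : sfun xs = RtoC 0.
Proof. unfold xs. rewrite sfun_PS, PS_real. f_equal.
  pose proof (sin_series PI) as H. rewrite sin_PI in H.
  destruct (Rmult_integral _ _ H) as [H1|H1]; auto. exfalso; apply PI_neq0; auto. Qed.

Lemma deriv_uniq (f : C -> C) x l l' : is_derive f x l -> is_derive f x l' -> l = l'.
Proof. intros H1 H2. rewrite <- (is_C_derive_unique f x l H1). apply is_C_derive_unique; auto. Qed.

Lemma Cmult_0 (a b : C) : a * b = RtoC 0 -> a = RtoC 0 \/ b = RtoC 0.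
Proof. intros H. assert (Cmod a * Cmod b = 0)%R by (rewrite <- Cmod_mult, H; apply Cmod_0).
  destruct (Rmult_integral _ _ H0); [left|right]; apply Cmod_eq_0; auto. Qed.

Lemma two_y (y : C) : RtoC 0 - 2 * y * RtoC 1 = RtoC 0 -> y = RtoC 0.
Proof. intros H. replace y with ((-/2) * (RtoC 0 - 2 * y * RtoC 1)). rewrite H. ring.
  field; intros E; injection E; lra. Qed.

Lemma val_cs x : cfun x * sfun x = RtoC 0 -> x * sfun x ^ 2 = RtoC 0 \/ x * sfun x ^ 2 = RtoC 1.
Proof. intros H. destruct (Cmult_0 _ _ H) as [Hc|Hs].
  - right. pose proof (ident x) as I. rewrite Hc in I. rewrite <- I. ring.
  - left. rewrite Hs. ring. Qed.

Lemma dA_x y x : is_derive (fun t => fW A_half_infty t y) x (cfun x * sfun x - RtoC 0).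
Proof. apply dCminus. apply L1. apply dCconst. Qed.
Lemma dA_y x y : is_derive (fun t => fW A_half_infty x t) y (RtoC 0 - 2 * y * RtoC 1).
Proof. apply (dCminus (fun _ => x * sfun x ^ 2) (fun t => t ^ 2)). apply dCconst. apply dCsq. apply dCid. Qed.
Lemma dD_x y x : is_derive (fun t => fW D_half_infty t y) x (cfun x * sfun x - (RtoC 1 * y ^ 2 + x * RtoC 0)).
Proof. apply (dCminus (fun t => t * sfun t ^ 2) (fun t => t * y ^ 2)). apply L1. apply (dCmult (fun t => t) (fun _ => y ^ 2)). apply dCid. apply dCconst. Qed.
Lemma dD_y x y : is_derive (fun t => fW D_half_infty x t) y (RtoC 0 - (RtoC 0 * y ^ 2 + x * (2 * y * RtoC 1))).
Proof. apply (dCminus (fun _ => x * sfun x ^ 2) (fun t => x * t ^ 2)). apply dCconst.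
  apply (dCmult (fun _ => x) (fun t => t ^ 2)). apply dCconst. apply dCsq. apply dCid. Qed.

Theorem theorem1 (W : Wtype) :
  (forall x y : C, critical_point (fW W) x y ->
     fW W x y = 0 \/ fW W x y = 1) /\
  (exists x y : C, critical_point (fW W) x y /\ fW W x y = 0) /\
  (exists x y : C, critical_point (fW W) x y /\ fW W x y = 1).
Proof. destruct W.
  - split; [|split].
    + intros x y [Hx Hy].
      pose proof (deriv_uniq _ _ _ _ (dA_y x y) Hy) as Ey. apply two_y in Ey. subst y.
      pose proof (deriv_uniq _ _ _ _ (dA_x (RtoC 0) x) Hx) as Ex.
      assert (cfun x * sfun x = RtoC 0) by (rewrite <- Ex; ring).
      destruct (val_cs x H) as [V|V]; [left|right]; unfold fW; rewrite V; ring.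
    + exists xs, (RtoC 0). split; [split|].
      * eapply deriv_eq. apply dA_x. rewrite s_xs. ring.
      * eapply deriv_eq. apply dA_y. ring.
      * unfold fW. rewrite s_xs. ring.
    + exists xc, (RtoC 0). split; [split|].
      * eapply deriv_eq. apply dA_x. rewrite c_xc. ring.
      * eapply deriv_eq. apply dA_y. ring.
      * unfold fW. pose proof (ident xc) as I. rewrite c_xc in I.
        replace (xc * sfun xc ^ 2) with (RtoC 1) by (rewrite <- I; ring). ring.
  - split; [|split].
    + intros x y [Hx Hy].
      pose proof (deriv_uniq _ _ _ _ (dD_y x y) Hy) as Ey.
      assert (x * y = RtoC 0) as Exy.
      { replace (x * y) with ((-/2) * (RtoC 0 - (RtoC 0 * y ^ 2 + x * (2 * y * RtoC 1)))).
        rewrite Ey. ring. field; intros E; injection E; lra. }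
      destruct (Cmult_0 _ _ Exy) as [E|E].
      * left. unfold fW. rewrite E. ring.
      * subst y. pose proof (deriv_uniq _ _ _ _ (dD_x (RtoC 0) x) Hx) as Ex.
        assert (cfun x * sfun x = RtoC 0) by (rewrite <- Ex; ring).
        destruct (val_cs x H) as [V|V]; [left|right]; unfold fW; rewrite V; ring.
    + exists xs, (RtoC 0). split; [split|].
      * eapply deriv_eq. apply dD_x. rewrite s_xs. ring.
      * eapply deriv_eq. apply dD_y. ring.
      * unfold fW. rewrite s_xs. ring.
    + exists xc, (RtoC 0). split; [split|].
      * eapply deriv_eq. apply dD_x. rewrite c_xc. ring.
      * eapply deriv_eq. apply dD_y. ring.
      * unfold fW. pose proof (ident xc) as I. rewrite c_xc in I.
        replace (xc * sfun xc ^ 2) with (RtoC 1) by (rewrite <- I; ring). ring.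
Qed.
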